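(* Let $A, B, C, F \in \mathbb{R}^{n\times n}$ with $C$ invertible, and consider the matrix equation $$AX + B\lvert CX\rvert = F$$ in the unknown $X \in \mathbb{R}^{n\times n}$. Let $I$ be the $n\times n$ identity matrix and set $R = I\otimes AC^{-1}$ and $S = I\otimes B$. Suppose each diagonal entry of $R+S$ has the same sign as the corresponding diagonal entry of $R-S$. Then the equation has exactly one solution if either of the following holds: (i) $R+S$ and $R-S$ are both strictly diagonally dominant by columns; (ii) $R+S$, $R-S$ and all column representative matrices of $\{R+S, R-S\}$ are irreducibly diagonally dominant by columns.
   Context: $\otimes$ denotes the Kronecker product and $\lvert M\rvert$ the entrywise absolute value. For a set $\{M_1,M_2\}$ of $N\times N$ matrices, a column representative is a matrix whose $j$-th column is either the $j$-th column of $M_1$ or the $j$-th column of $M_2$, for each $j=1,\dots,N$. *)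

(* Defs.v *)
From HB Require Import structures.
From mathcomp Require Import all_boot all_order all_algebra.
From mathcomp Require Export mxtens.
From mathcomp Require Import reals.
Set Implicit Arguments. Unset Strict Implicit. Unset Printing Implicit Defensive.
Import Order.TTheory GRing.Theory Num.Theory.
Local Open Scope ring_scope.

Definition mxabs {R : numDomainType} {m n : nat} (M : 'M[R]_(m, n)) : 'M[R]_(m, n) :=
  map_mx (fun x => `|x|) M.

Definition sdd_col {R : numDomainType} {N : nat} (M : 'M[R]_N) : Prop :=
  forall j : 'I_N, \sum_(i < N | i != j) `|M i j| < `|M j j|.

Definition dd_col {R : numDomainType} {N : nat} (M : 'M[R]_N) : Prop :=
  forall j : 'I_N, \sum_(i < N | i != j) `|M i j| <= `|M j j|.

(* irreducibility: M is not permutation-similar to a block upper triangular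
   matrix [[M11, M12],[0, M22]] with nonempty square diagonal blocks, i.e.
   for no nonempty proper index set J do we have M i j = 0 for all i in J,
   j not in J. *)
Definition irreducible_mx {R : numDomainType} {N : nat} (M : 'M[R]_N) : Prop :=
  forall J : {set 'I_N}, J != set0 -> J != setT ->
    exists i j, [/\ i \in J, j \notin J & M i j != 0].

Definition idd_col {R : numDomainType} {N : nat} (M : 'M[R]_N) : Prop :=
  [/\ irreducible_mx M, dd_col M &
      exists j : 'I_N, \sum_(i < N | i != j) `|M i j| < `|M j j|].

Definition col_rep {R : Type} {m n : nat} (M1 M2 : 'M[R]_(m, n)) (b : 'I_n -> bool)
  : 'M[R]_(m, n) := \matrix_(i, j) (if b j then M1 i j else M2 i j).

(* Main.v *)
Require Import Defs.
From HB Require Import structures.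
From mathcomp Require Import all_boot all_order all_algebra.
From mathcomp Require Import mxtens reals.
From mathcomp Require Import all_classical all_reals all_analysis.
From mathcomp Require Import ring lra.
Set Implicit Arguments. Unset Strict Implicit. Unset Printing Implicit Defensive.
Import Order.TTheory GRing.Theory Num.Theory.
Import numFieldNormedType.Exports.

Local Open Scope ring_scope.

Definition cvec (R : realType) (N : nat) := 'cV[R]_N.
HB.instance Definition _ (R : realType) (N : nat) := NormedModule.copy (cvec R N) 'cV[R]_N.
HB.instance Definition _ (R : realType) (N : nat) := Complete.copy (cvec R N) 'cV[R]_N.

Lemma fixpt (R : realType) (N : nat) (f : 'cV[R]_N -> 'cV[R]_N) (q : R) :
  0 <= q -> q < 1 -> (forall x y, `|f x - f y| <= q * `|x - y|) ->
  exists p, f p = p.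
Proof.
move=> q0 q1 H.
pose g : {fun [set: cvec R N]%classic >-> [set: cvec R N]%classic} := totalfun (f : cvec R N -> cvec R N).
have hc : is_contraction g.
  exists (NngNum q0); split => //= -[x y] _ /=; exact: H.
case: (banach_fixed_point hc closedT) => [|p _ hp].
  by exists 0.
by exists p; rewrite {2}hp.
Qed.

Definition norm1 (R : realType) (N : nat) (v : 'cV[R]_N) := \sum_i `|v i 0|.

Lemma norm1_ge0 (R : realType) (N : nat) (v : 'cV[R]_N) : 0 <= norm1 v.
Proof. by apply: sumr_ge0 => i _. Qed.

Lemma term_le_sum (R : realType) (N : nat) (F : 'I_N -> R) j :
  (forall i, 0 <= F i) -> F j <= \sum_i F i.
Proof.
move=> H; rewrite (bigD1 j) //= lerDl; exact: sumr_ge0.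
Qed.

Lemma norm_le_norm1 (R : realType) (N : nat) (v : 'cV[R]_N) : `|v| <= norm1 v.
Proof.
rewrite -[`|v|]/(mx_norm v) mx_normrE.
apply: bigmax_le; first exact: norm1_ge0.
move=> [i j] _ /=; rewrite (ord1 j).
exact: (@term_le_sum R N (fun i => `|v i 0|) i).
Qed.

Lemma coord_le_norm (R : realType) (N : nat) (v : 'cV[R]_N) i : `|v i 0| <= `|v|.
Proof.
rewrite -[`|v|]/(mx_norm v) mx_normrE.
apply/bigmax_geP; right; by exists (i, 0).
Qed.

Lemma norm1_le (R : realType) (N : nat) (v : 'cV[R]_N) : norm1 v <= N%:R * `|v|.
Proof.
rewrite /norm1 mulr_natl.
have -> : `|v| *+ N = \sum_(i < N) `|v| by rewrite sumr_const card_ord.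
by apply: ler_sum => i _; apply: coord_le_norm.
Qed.

Lemma bernoulli (R : realType) (q : R) k : 0 <= q <= 1 ->
  q ^+ k * (1 + k%:R * (1 - q)) <= 1.
Proof.
move=> /andP[q0 q1]; elim: k => [|k IH]; first by rewrite expr0 mul0r addr0 mulr1.
have h0 : 0 <= q ^+ k by apply: exprn_ge0.
rewrite exprS -natr1.
have : q ^+ k * (q * (1 + (k%:R + 1) * (1 - q))) <= q ^+ k * (1 + k%:R * (1 - q)).
  apply: ler_wpM2l => //.
  have hk : 0 <= k%:R :> R by apply: ler0n.
  have : 0 <= (k%:R + 1) * ((1 - q) * (1 - q)) by apply: mulr_ge0; nra.
  nra.
move=> h; apply: le_trans IH; apply: le_trans h; rewrite mulrA; lra.
Qed.

Lemma small_pow (R : realType) (q c : R) : 0 <= q -> q < 1 -> 0 <= c ->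
  exists k, q ^+ k * c < 1.
Proof.
move=> q0 q1 c0.
have hq : 0 < 1 - q by lra.
have hx : 0 <= c / (1 - q) by apply: divr_ge0 => //; lra.
exists (Num.Def.archi_bound (c / (1 - q))).
set k := Num.Def.archi_bound _.
have hk := archi_boundP hx; rewrite -/k in hk.
have hb := @bernoulli R q k.
have h0 : 0 <= q ^+ k by apply: exprn_ge0.
have : c < k%:R * (1 - q) by rewrite -ltr_pdivrMr.
have: q ^+ k * (1 + k%:R * (1 - q)) <= 1 by apply: hb; apply/andP; split; lra.
move=> h1 h2.
have : q ^+ k * c <= q ^+ k * (k%:R * (1 - q)) by apply: ler_wpM2l => //; lra.
move=> h3.
case: (ltrgt0P (q ^+ k)) => hq0.
- have : q ^+ k * c < q ^+ k * (k%:R * (1 - q)) by rewrite ltr_pM2l.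
  nra.
- lra.
- rewrite hq0 mul0r; lra.
Qed.
Lemma abs_split (R : realType) (x y : R) : `|y| <= `|x| ->
  `|(x + y) / 2| + `|(x - y) / 2| = `|x|.
Proof.
move=> h.
have e1 : (x + y) / 2 = x / 2 + y / 2 by rewrite mulrDl.
have e2 : (x - y) / 2 = x / 2 - y / 2 by rewrite mulrBl.
rewrite e1 e2.
case: (lerP 0 x) => hx; case: (lerP 0 y) => hy.
- move: h; rewrite (ger0_norm hx) (ger0_norm hy) => h.
  rewrite !ger0_norm; lra.
- move: h; rewrite (ger0_norm hx) (ltr0_norm hy) => h.
  rewrite (ger0_norm (x := x / 2 + y / 2)); last lra.
  rewrite (ger0_norm (x := x / 2 - y / 2)); lra.
- move: h; rewrite (ltr0_norm hx) (ger0_norm hy) => h.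
  rewrite (ler0_norm (x := x / 2 + y / 2)); last lra.
  rewrite (ler0_norm (x := x / 2 - y / 2)); last lra.
  lra.
- move: h; rewrite (ltr0_norm hx) (ltr0_norm hy) => h.
  rewrite (ler0_norm (x := x / 2 + y / 2)); last lra.
  rewrite (ler0_norm (x := x / 2 - y / 2)); last lra.
  lra.
Qed.

Lemma min_pos (R : realType) N (f : 'I_N -> R) : (forall j, 0 < f j) ->
  exists d, [/\ 0 < d, d <= 1 & forall j, d <= f j].
Proof.
move=> hf.
suff : forall s : seq 'I_N, exists d, [/\ 0 < d, d <= 1 & forall j, j \in s -> d <= f j].
  by case/(_ (enum 'I_N)) => d [h1 h2 h3]; exists d; split => // j; apply: h3; rewrite mem_enum.
elim => [|a s [d [h1 h2 h3]]]; first by exists 1; split => //; lra.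
exists (Num.min d (f a)); split.
- by rewrite lt_min h1 hf.
- by rewrite ge_min h2.
- move=> j; rewrite inE => /orP [/eqP -> | hj]; first by rewrite ge_min lexx orbT.
  by rewrite ge_min h3.
Qed.

Lemma exch (R : realType) N (F : 'I_N -> 'I_N -> R) :
  \sum_i \sum_(j | j != i) F i j = \sum_j \sum_(i | i != j) F i j.
Proof.
rewrite (exchange_big_dep xpredT) //=; apply: eq_bigr => j _; apply: eq_bigl => i.
by rewrite eq_sym.
Qed.
Definition Phi (R : realType) N (Rm Sm : 'M[R]_N) (z : 'cV[R]_N) := Rm *m z + Sm *m mxabs z.
Definition Tmap (R : realType) N (Rm Sm : 'M[R]_N) (e : 'I_N -> R) (al : R) (g z : 'cV[R]_N) :=
  \col_i (z i 0 - al * e i * (Phi Rm Sm z i 0 - g i 0)).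

Lemma Phi_diff (R : realType) N (Rm Sm : 'M[R]_N) (z w : 'cV[R]_N) i :
  Phi Rm Sm z i 0 - Phi Rm Sm w i 0 =
  \sum_j ((Rm + Sm) i j * ((z j 0 - w j 0 + (`|z j 0| - `|w j 0|)) / 2)
        + (Rm - Sm) i j * ((z j 0 - w j 0 - (`|z j 0| - `|w j 0|)) / 2)).
Proof.
rewrite /Phi !mxE -!big_split /= -sumrB; apply: eq_bigr => j _.
by rewrite /mxabs !mxE; field.
Qed.

Lemma contr (R : realType) N (Rm Sm : 'M[R]_N) (e : 'I_N -> R) (al d : R) (g : 'cV[R]_N) :
  (forall i, e i * (Rm + Sm) i i = `|(Rm + Sm) i i|) ->
  (forall i, e i * (Rm - Sm) i i = `|(Rm - Sm) i i|) ->
  (forall i, `|e i| = 1) -> 0 < al ->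
  (forall i, al * `|(Rm + Sm) i i| <= 1) -> (forall i, al * `|(Rm - Sm) i i| <= 1) ->
  (forall j, d <= `|(Rm + Sm) j j| - \sum_(i | i != j) `|(Rm + Sm) i j|) ->
  (forall j, d <= `|(Rm - Sm) j j| - \sum_(i | i != j) `|(Rm - Sm) i j|) ->
  forall z w, norm1 (Tmap Rm Sm e al g z - Tmap Rm Sm e al g w) <= (1 - al * d) * norm1 (z - w).
Proof.
move=> hP hQ he hal hPa hQa hdP hdQ z w.
set P := Rm + Sm in hP hPa hdP *; set Q := Rm - Sm in hQ hQa hdQ *.
pose x j := z j 0 - w j 0.
pose y j := `|z j 0| - `|w j 0|.
pose a j := (x j + y j) / 2.
pose b j := (x j - y j) / 2.
have hab j : `|a j| + `|b j| = `|x j|.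
  by apply: abs_split; apply: ler_dist_dist.
have hu i : (Tmap Rm Sm e al g z - Tmap Rm Sm e al g w) i 0 =
    (a i * (1 - al * `|P i i|) + b i * (1 - al * `|Q i i|))
    - al * e i * \sum_(j | j != i) (P i j * a j + Q i j * b j).
  have -> : (Tmap Rm Sm e al g z - Tmap Rm Sm e al g w) i 0 =
      x i - al * e i * (Phi Rm Sm z i 0 - Phi Rm Sm w i 0).
    by rewrite /Tmap !mxE /x; ring.
  by rewrite Phi_diff -/P -/Q (bigD1 i) //= -hP -hQ /a /b /x /y; field.
have h1 i : `|(Tmap Rm Sm e al g z - Tmap Rm Sm e al g w) i 0| <=
    (`|a i| * (1 - al * `|P i i|) + `|b i| * (1 - al * `|Q i i|))
    + al * \sum_(j | j != i) (`|P i j| * `|a j| + `|Q i j| * `|b j|).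
  rewrite hu; apply: le_trans (ler_normB _ _) _; apply: lerD.
    apply: le_trans (ler_normD _ _) _; rewrite !normrM.
    rewrite (ger0_norm (x := 1 - _)); last by rewrite subr_ge0.
    by rewrite (ger0_norm (x := 1 - al * `|Q i i|)) // subr_ge0.
  rewrite !normrM he mulr1 (gtr0_norm hal) ler_wpM2l //; first exact: ltW.
  apply: le_trans (ler_norm_sum _ _ _) _; apply: ler_sum => j _.
  by apply: le_trans (ler_normD _ _) _; rewrite !normrM.
rewrite /norm1; apply: le_trans (ler_sum _ (fun i _ => h1 i)) _.
rewrite big_split /= -mulr_sumr exch mulr_sumr -big_split /=.
rewrite [in X in _ <= X]mulr_sumr; apply: ler_sum => j _.
have -> : \sum_(i | i != j) (`|P i j| * `|a j| + `|Q i j| * `|b j|) =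
   `|a j| * \sum_(i | i != j) `|P i j| + `|b j| * \sum_(i | i != j) `|Q i j|.
  by rewrite big_split /= !mulr_sumr; congr (_ + _); apply: eq_bigr => i _; rewrite mulrC.
have hx : (z - w) j 0 = x j.
  by rewrite !mxE.
rewrite hx.
rewrite -hab.
have ha : 0 <= `|a j| by [].
have hb : 0 <= `|b j| by [].
have k1 : 0 <= `|a j| * (al * (`|P j j| - \sum_(i | i != j) `|P i j| - d)).
  by apply: mulr_ge0 => //; apply: mulr_ge0; [exact: ltW | rewrite subr_ge0].
have k2 : 0 <= `|b j| * (al * (`|Q j j| - \sum_(i | i != j) `|Q i j| - d)).
  by apply: mulr_ge0 => //; apply: mulr_ge0; [exact: ltW | rewrite subr_ge0].
nra.
Qed.

Lemma iter_contr (R : realType) N (T : 'cV[R]_N -> 'cV[R]_N) (q : R) :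
  0 <= q -> (forall z w, norm1 (T z - T w) <= q * norm1 (z - w)) ->
  forall k z w, norm1 (iter k T z - iter k T w) <= q ^+ k * norm1 (z - w).
Proof.
move=> q0 hT; elim => [|k IH] z w /=; first by rewrite expr0 mul1r.
apply: le_trans (hT _ _) _; rewrite exprS -mulrA; exact: ler_wpM2l.
Qed.

Lemma norm1_eq0 (R : realType) N (v : 'cV[R]_N) : norm1 v = 0 -> v = 0.
Proof.
move=> h; apply/matrixP => i j; rewrite (ord1 j) mxE.
have := @psumr_eq0P R 'I_N xpredT (fun i => `|v i 0|) (fun i _ => normr_ge0 _) h i isT.
by move/normr0_eq0.
Qed.

Lemma ave_core (R : realType) N (Rm Sm : 'M[R]_N) :
  (forall k, Num.sg ((Rm + Sm) k k) = Num.sg ((Rm - Sm) k k)) ->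
  sdd_col (Rm + Sm) -> sdd_col (Rm - Sm) ->
  forall g : 'cV[R]_N, exists! z : 'cV[R]_N, Rm *m z + Sm *m mxabs z = g.
Proof.
move=> hsg hP hQ g.
pose e i := Num.sg ((Rm + Sm) i i).
have hPnz i : (Rm + Sm) i i != 0.
  have := hP i; rewrite -normr_gt0; apply: le_lt_trans; exact: sumr_ge0.
have hQnz i : (Rm - Sm) i i != 0.
  have := hQ i; rewrite -normr_gt0; apply: le_lt_trans; exact: sumr_ge0.
have heP i : e i * (Rm + Sm) i i = `|(Rm + Sm) i i| by rewrite normrEsg.
have heQ i : e i * (Rm - Sm) i i = `|(Rm - Sm) i i| by rewrite /e hsg normrEsg.
have he i : `|e i| = 1 by rewrite /e normr_sg hPnz.
pose K := 1 + \sum_j (`|(Rm + Sm) j j| + `|(Rm - Sm) j j|).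
have hS : 0 <= \sum_j (`|(Rm + Sm) j j| + `|(Rm - Sm) j j|).
  by apply: sumr_ge0 => j _; apply: addr_ge0.
have hK : 0 < K by rewrite /K; lra.
pose al := K^-1.
have hal : 0 < al by rewrite invr_gt0.
have hal1 : al <= 1 by rewrite invr_le1 // /K; [lra | apply: unitf_gt0].
have hPK i : `|(Rm + Sm) i i| <= K.
  have := @term_le_sum R N (fun j => `|(Rm + Sm) j j| + `|(Rm - Sm) j j|) i.
  move=> /(_ (fun j => addr_ge0 (normr_ge0 _) (normr_ge0 _))) /=.
  have := normr_ge0 ((Rm - Sm) i i); rewrite /K; lra.
have hQK i : `|(Rm - Sm) i i| <= K.
  have := @term_le_sum R N (fun j => `|(Rm + Sm) j j| + `|(Rm - Sm) j j|) i.
  move=> /(_ (fun j => addr_ge0 (normr_ge0 _) (normr_ge0 _))) /=.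
  have := normr_ge0 ((Rm + Sm) i i); rewrite /K; lra.
have hPa i : al * `|(Rm + Sm) i i| <= 1 by rewrite mulrC ler_pdivrMr // mul1r.
have hQa i : al * `|(Rm - Sm) i i| <= 1 by rewrite mulrC ler_pdivrMr // mul1r.
have hf j : 0 < Num.min (`|(Rm + Sm) j j| - \sum_(i | i != j) `|(Rm + Sm) i j|)
           (`|(Rm - Sm) j j| - \sum_(i | i != j) `|(Rm - Sm) i j|).
  by rewrite lt_min !subr_gt0 hP hQ.
have [d [d0 d1 hd]] := min_pos hf.
have hdP j : d <= `|(Rm + Sm) j j| - \sum_(i | i != j) `|(Rm + Sm) i j|.
  by have := hd j; rewrite le_min => /andP[].
have hdQ j : d <= `|(Rm - Sm) j j| - \sum_(i | i != j) `|(Rm - Sm) i j|.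
  by have := hd j; rewrite le_min => /andP[].
pose q := 1 - al * d.
have hq0 : 0 <= q by rewrite /q subr_ge0; nra.
have hq1 : q < 1 by rewrite /q; have := mulr_gt0 hal d0; lra.
pose T := Tmap Rm Sm e al g.
have hc := contr g heP heQ he hal hPa hQa hdP hdQ.
have hfix z : T z = z -> Rm *m z + Sm *m mxabs z = g.
  move=> hz; apply/matrixP => i j; rewrite (ord1 j).
  have := congr1 (fun M : 'cV[R]_N => M i 0) hz; rewrite /T /Tmap mxE => /eqP.
  rewrite -subr_eq0 addrAC subrr add0r oppr_eq0 !mulf_eq0 (gt_eqF hal) /=.
  have : e i != 0 by rewrite -normr_gt0 he.
  move=> /negbTE -> /=; rewrite subr_eq0 => /eqP; done.
have hsol z : Rm *m z + Sm *m mxabs z = g -> T z = z.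
  move=> hz; apply/matrixP => i j; rewrite (ord1 j) /T /Tmap mxE /Phi hz subrr mulr0 subr0.
  done.
have [k hk] := small_pow hq0 hq1 (ler0n R N).
pose f := iter k T.
have hfl x y : `|f x - f y| <= (q ^+ k * N%:R) * `|x - y|.
  apply: le_trans (norm_le_norm1 _) _.
  apply: le_trans (iter_contr hq0 hc k x y) _.
  rewrite -mulrA; apply: ler_wpM2l; first exact: exprn_ge0.
  exact: norm1_le.
have [p hp] := fixpt (mulr_ge0 (exprn_ge0 k hq0) (ler0n R N)) hk hfl.
have hTp : T p = p.
  have e1 : f (T p) = T p by rewrite /f -iterSr iterS -/f hp.
  have := hfl (T p) p; rewrite e1 hp => h.
  have h0 := normr_ge0 (T p - p).
  have hc0 : 0 <= q ^+ k * N%:R := mulr_ge0 (exprn_ge0 k hq0) (ler0n R N).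
  have : `|T p - p| = 0 by nra.
  by move/normr0_eq0/eqP; rewrite subr_eq0 => /eqP.
exists p; split; first exact: hfix.
move=> z hz; have hTz := hsol z hz.
have := hc p z; rewrite -/T hTp hTz => h.
have h0 := norm1_ge0 (p - z).
have hc0 : 0 < al * d := mulr_gt0 hal d0.
move: h hc0 h0; set c := al * d; set X := norm1 (p - z) => h hc0 h0.
have : c * X <= 0 by lra.
rewrite pmulr_rle0 // => hX.
have : X = 0 by lra.
by move/norm1_eq0/eqP; rewrite subr_eq0 => /eqP.
Qed.

Definition vecm (R : realType) n (Y : 'M[R]_n) : 'cV[R]_(n * n) :=
  \col_k Y (mxtens_unindex k).2 (mxtens_unindex k).1.
Definition unvec (R : realType) n (z : 'cV[R]_(n * n)) : 'M[R]_n :=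
  \matrix_(i, j) z (mxtens_index (j, i)) 0.

Lemma vecK (R : realType) n (Y : 'M[R]_n) : unvec (vecm Y) = Y.
Proof. by apply/matrixP => i j; rewrite !mxE mxtens_indexK. Qed.

Lemma unvecK (R : realType) n (z : 'cV[R]_(n * n)) : vecm (unvec z) = z.
Proof.
apply/matrixP => k j; rewrite (ord1 j) !mxE.
by case: (mxtens_indexP k) => a b; rewrite mxtens_indexK.
Qed.

Lemma vec_add (R : realType) n (X Y : 'M[R]_n) : vecm (X + Y) = vecm X + vecm Y.
Proof. by apply/matrixP => k j; rewrite !mxE. Qed.

Lemma vec_abs (R : realType) n (Y : 'M[R]_n) : vecm (mxabs Y) = mxabs (vecm Y).
Proof. by apply/matrixP => k j; rewrite !mxE. Qed.

Lemma vec_tens (R : realType) n (M Y : 'M[R]_n) :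
  (1%:M *t M) *m vecm Y = vecm (M *m Y).
Proof.
apply/matrixP => k j0; rewrite (ord1 j0).
case: (mxtens_indexP k) => j i.
rewrite [in RHS]mxE mxtens_indexK /= mxE.
rewrite (reindex (@mxtens_index n n)) /=; last first.
  by exists (@mxtens_unindex n n) => x _; [apply: mxtens_indexK | apply: mxtens_unindexK].
have -> : \sum_(p : 'I_n * 'I_n) (1%:M *t M) (mxtens_index (j, i)) (mxtens_index p) *
      vecm Y (mxtens_index p) 0 =
    \sum_(c < n) \sum_(d < n) (1%:M *t M) (mxtens_index (j, i)) (mxtens_index (c, d)) *
      vecm Y (mxtens_index (c, d)) 0.
  by rewrite pair_big; apply: eq_big => // -[c d].
rewrite (bigD1 j) //= [X in _ + X]big1 ?addr0; last first.
  move=> c hc; apply: big1 => d _.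
  by rewrite tensmxE mxE eq_sym (negbTE hc) mulr0n mul0r mul0r.
rewrite mxE; apply: eq_bigr => d _.
by rewrite tensmxE !mxE mxtens_indexK /= eqxx mulr1n mul1r.
Qed.

Lemma blk_sdd (R : realType) n (X : 'M[R]_(n * n)) :
  (forall a b c d, a != c -> X (mxtens_index (a, b)) (mxtens_index (c, d)) = 0) ->
  idd_col X -> sdd_col X.
Proof.
move=> hb [hirr hdd [j0 hj0]].
case: n X hb hirr hdd j0 hj0 => [|[|n]] X hb hirr hdd j0 hj0.
- by move=> j; case: j.
- move=> j; have -> : j = j0.
    by apply/val_inj; case: j => [[|m] hm] //=; case: j0 hj0 => [[|m'] hm'] //=.
  exact: hj0.
- exfalso.
  pose J := [set k : 'I_(n.+2 * n.+2) | (mxtens_unindex k).1 == ord0].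
  have J0 : J != finset.set0.
    apply/negP => /eqP hJ.
    have : mxtens_index (@ord0 n.+1, @ord0 n.+1) \in J by rewrite inE mxtens_indexK.
    by rewrite hJ inE.
  have JT : J != finset.setT.
    apply/eqP => hJ.
    have : mxtens_index (@Ordinal n.+2 1 isT, ord0) \in J by rewrite hJ inE.
    by rewrite inE mxtens_indexK.
  have [i [j [hi hj hX]]] := hirr J J0 JT.
  move: hi hj hX; case: (mxtens_indexP i) => a b; case: (mxtens_indexP j) => c d.
  rewrite !inE !mxtens_indexK /= => /eqP -> hc.
  by rewrite hb ?eqxx // eq_sym.
Qed.

Lemma tens_blk (R : realType) n (M1 M2 : 'M[R]_n) (a b c d : 'I_n) : a != c ->
  ((1%:M *t M1) + (1%:M *t M2)) (@mxtens_index n n (a, b)) (@mxtens_index n n (c, d)) = 0 /\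
  ((1%:M *t M1) - (1%:M *t M2)) (@mxtens_index n n (a, b)) (@mxtens_index n n (c, d)) = 0.
Proof.
move=> hac; rewrite !mxE !mxtens_indexK /= (negbTE hac) !mulr0n !mul0r.
by rewrite oppr0 addr0.
Qed.

Theorem theorem4p4 (R : realType) (n : nat) (A B C F : 'M[R]_n) :
  C \in unitmx ->
  let Rm := (1%:M : 'M[R]_n) *t (A *m invmx C) in
  let Sm := (1%:M : 'M[R]_n) *t B in
  (forall k : 'I_(n * n), Num.sg ((Rm + Sm) k k) = Num.sg ((Rm - Sm) k k)) ->
  (sdd_col (Rm + Sm) /\ sdd_col (Rm - Sm)) \/
  (idd_col (Rm + Sm) /\ idd_col (Rm - Sm) /\
   forall b : 'I_(n * n) -> bool, idd_col (col_rep (Rm + Sm) (Rm - Sm) b)) ->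
  exists! X : 'M[R]_n, A *m X + B *m mxabs (C *m X) = F.
Proof.
move=> hC Rm Sm hsg hcase.
have [hP hQ] : sdd_col (Rm + Sm) /\ sdd_col (Rm - Sm).
  case: hcase => [//|[h1 [h2 _]]]; split.
  - apply: blk_sdd h1 => a b c d hac; exact: (tens_blk (A *m invmx C) B b d hac).1.
  - apply: blk_sdd h2 => a b c d hac; exact: (tens_blk (A *m invmx C) B b d hac).2.
have key Y : Rm *m vecm Y + Sm *m mxabs (vecm Y) = vecm (A *m invmx C *m Y + B *m mxabs Y).
  by rewrite -vec_abs /Rm /Sm !vec_tens vec_add.
have [z [hz huniq]] := ave_core hsg hP hQ (vecm F).
exists (invmx C *m unvec z); split.
  rewrite (mulKVmx hC) -[in RHS](vecK F) -hz -[in RHS](unvecK z) key vecK.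
  by rewrite -!mulmxA.
move=> X hX.
have e1 : A *m X = A *m invmx C *m (C *m X) by rewrite -mulmxA (mulKmx hC).
have : Rm *m vecm (C *m X) + Sm *m mxabs (vecm (C *m X)) = vecm F.
  by rewrite key -e1 hX.
move/huniq => hzX.
by rewrite hzX vecK (mulKmx hC).
Qed.
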